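(* Let $I$ be a resident-minimal instance and $(P,X)$ a (general) prescription for $I$. Then there is a resident-changeless and hospital-complete extension $I'$ of $I$ such that $(P,Y)$, where $Y=X\setminus\mathrm{rej}(I')$, is a prescription for $I'$.
   Context: An instance $I$ consists of finite disjoint sets $R$ (residents) and $H$ (hospitals), a positive integer quota $q_h$ for each $h\in H$, for each $r\in R$ a preference list of $r$ (a sequence of distinct members of $H$, not necessarily all), and for each $h\in H$ a preference list of $h$ (a sequence of distinct members of $R$). A list is complete if it contains every member of the opposite side; an instance is hospital-complete if every hospital's list is complete. A match is a pair $(r,h)\in R\times H$. For a set $M$ of matches, $\mathrm{res}_h M=\{r:(r,h)\in M\}$, $\mathrm{res}\,M=\{r:(r,h)\in M\text{ for some }h\}$. $J$ is an extension of $I$ (same $R,H$, quotas) if every list of $J$ has the corresponding list of $I$ as a prefix; it is resident-changeless if every resident's list is the same in $I$ and $J$. An event is $(r,h)^+$ (proposal) or $(r,h)^-$ (rejection). For an event sequence $\sigma$, $\mathrm{prop}(\sigma)$, $\mathrm{rej}(\sigma)$ are the sets of matches proposed/rejected in $\sigma$, $\mathrm{tent}(\sigma)=\mathrm{prop}(\sigma)\setminus\mathrm{rej}(\sigma)$, and $\mathrm{pend}_I(\sigma)$ is the set of $(r,h)\in\mathrm{tent}(\sigma)$ with $r$ not on the list of $h$ in $I$. A match $(r,h)\in M$ is ousted from $M$ in $I$ if the list of $h$ in $I$ contains at least $q_h$ residents of $\mathrm{res}_h M$ and either $r$ is not on it or $r$ is preceded on it by at least $q_h$ residents of $\mathrm{res}_h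 M$. $I$-feasible sequences: the empty sequence is $I$-feasible; if $\sigma$ is $I$-feasible then $\sigma+(r,h)^+$ is $I$-feasible if $r\notin\mathrm{res}\,\mathrm{tent}(\sigma)$, $(r,h)\notin\mathrm{prop}(\sigma)$, $h$ is on the list of $r$ in $I$ and $(r,h')\in\mathrm{rej}(\sigma)$ for every $h'$ preceding $h$ on it; and $\sigma+(r,h)^-$ is $I$-feasible if $(r,h)$ is ousted from $\mathrm{prop}(\sigma)$ in $I$ and $(r,h)\notin\mathrm{rej}(\sigma)$. All maximal $I$-feasible sequences contain the same events; $\mathrm{prop}(I),\mathrm{rej}(I),\mathrm{tent}(I),\mathrm{pend}(I)$ denote $\mathrm{prop}(\sigma),\mathrm{rej}(\sigma),\mathrm{tent}(\sigma),\mathrm{pend}_I(\sigma)$ for any maximal $I$-feasible $\sigma$. $I$ is resident-minimal if $\mathrm{prop}(I)$ equals the set of matches $(r,h)$ with $h$ on the list of $r$ in $I$. For a resident-minimal instance $I$, a (general) prescription for $I$ is a pair $(P,X)$ of sets of matches such that: (P1) $P\cap\mathrm{prop}(I)=\emptyset$; (P2) for each $r\in R$ there is at most one $h$ with $(r,h)\in P$; (P3) $X\subseteq\mathrm{tent}(I)$; (P4) $\mathrm{res}\,P\cap\mathrm{res}\,\mathrm{tent}(I)\subseteq\mathrm{res}\,X$; (P5) for each $h$, $|\mathrm{res}_h(P\cup(\mathrm{tent}(I)\setminus X))|\le q_h$, with equality if $\mathrm{res}_h X\ne\emptyset$; (P6') for each $h$, every member of $\mathrm{res}_h(P\cup((\mathrm{tent}(I)\setminus\mathrm{pend}(I))\setminus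 X))$ precedes all members of $\mathrm{res}_h(X\setminus\mathrm{pend}(I))$ in the list of $h$ in $I$, and if $\mathrm{res}_h(X\setminus\mathrm{pend}(I))\ne\emptyset$ then $\mathrm{res}_h\,\mathrm{pend}(I)\subseteq\mathrm{res}_h X$. When $I$ is hospital-complete (so $\mathrm{pend}(I)=\emptyset$), a prescription for $I$ is such a pair with (P6') read as (P6): every member of $\mathrm{res}_h(P\cup(\mathrm{tent}(I)\setminus X))$ precedes all members of $\mathrm{res}_h X$ in the list of $h$ in $I$. *)

(* Defs.v *)
From mathcomp Require Import all_boot.
From Stdlib Require Import ClassicalEpsilon.

Set Implicit Arguments.
Unset Strict Implicit.
Unset Printing Implicit Defensive.

(* An instance over residents R and hospitals H (quotas are a separate
   parameter q : H -> nat, shared by an instance and its extensions). *)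
Record instance (R H : Type) := Inst {
  rlist : R -> seq H;
  hlist : H -> seq R
}.

Inductive event (R H : Type) :=
| Pr of R * H
| Rj of R * H.

Section HR.
Context {R H : finType}.
Implicit Types (I J : instance R H) (q : H -> nat) (M P X : {set R * H}).

Definition inst_ok q I : Prop :=
  (forall h, 0 < q h) /\ (forall r, uniq (rlist I r)) /\ (forall h, uniq (hlist I h)).

Definition precedes {T : eqType} (l : seq T) (x y : T) : bool :=
  [&& x \in l, y \in l & index x l < index y l].

Definition resh (h : H) M : {set R} := [set r | (r, h) \in M].
Definition res M : {set R} := [set r | [exists h, (r, h) \in M]].

Definition prop (s : seq (event R H)) : {set R * H} :=
  [set m | has (fun e => if e is Pr m' then m' == m else false) s].
Definition rej (s : seq (event R H)) : {set R * H} :=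
  [set m | has (fun e => if e is Rj m' then m' == m else false) s].
Definition tent (s : seq (event R H)) : {set R * H} := prop s :\: rej s.
Definition pend I (s : seq (event R H)) : {set R * H} :=
  [set m in tent s | m.1 \notin hlist I m.2].

Definition ousted q I M (m : R * H) : bool :=
  let: (r, h) := m in
  [&& m \in M,
      q h <= #|[set r' in resh h M | r' \in hlist I h]| &
      (r \notin hlist I h) ||
      (q h <= #|[set r' in resh h M | precedes (hlist I h) r' r]|)].

Definition step_ok q I (s : seq (event R H)) (e : event R H) : bool :=
  match e with
  | Pr (r, h) =>
      [&& r \notin res (tent s), (r, h) \notin prop s, h \in rlist I r &
          all (fun h' => (r, h') \in rej s) (take (index h (rlist I r)) (rlist I r))]
  | Rj m => ousted q I (prop s) m && (m \notin rej s)
  end.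

Inductive feasible q I : seq (event R H) -> Prop :=
| feas_nil : feasible q I [::]
| feas_rcons s e : feasible q I s -> step_ok q I s e -> feasible q I (rcons s e).

Definition maximal q I (s : seq (event R H)) : Prop :=
  feasible q I s /\ (forall t, feasible q I (s ++ t) -> t = [::]).

(* "any maximal I-feasible sequence": a chosen one *)
Definition maxseq q I : seq (event R H) :=
  epsilon (inhabits [::]) (maximal q I).

Definition propI q I := prop (maxseq q I).
Definition rejI q I := rej (maxseq q I).
Definition tentI q I := tent (maxseq q I).
Definition pendI q I := pend I (maxseq q I).

Definition resident_minimal q I : Prop :=
  propI q I = [set m | m.2 \in rlist I m.1].

Definition hospital_complete I : Prop := forall h r, r \in hlist I h.

Definition extension I J : Prop :=
  (forall r, prefix (rlist I r) (rlist J r)) /\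
  (forall h, prefix (hlist I h) (hlist J h)).

Definition resident_changeless I J : Prop := forall r, rlist J r = rlist I r.

Definition presc_P1_P5 q I P X : Prop :=
  [/\ P :&: propI q I = set0,
      (forall r h h', (r, h) \in P -> (r, h') \in P -> h = h'),
      X \subset tentI q I,
      res P :&: res (tentI q I) \subset res X &
      (forall h, #|resh h (P :|: (tentI q I :\: X))| <= q h /\
                 (resh h X != set0 -> #|resh h (P :|: (tentI q I :\: X))| = q h))].

(* general prescription (with (P6')) for a resident-minimal instance *)
Definition prescription q I P X : Prop :=
  [/\ resident_minimal q I, presc_P1_P5 q I P X &
      forall h,
        (forall r r', r \in resh h (P :|: ((tentI q I :\: pendI q I) :\: X)) ->
                      r' \in resh h (X :\: pendI q I) ->
                      precedes (hlist I h) r r') /\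
        (resh h (X :\: pendI q I) != set0 -> resh h (pendI q I) \subset resh h X)].

(* prescription for a hospital-complete resident-minimal instance (with (P6)) *)
Definition prescription_hc q I P X : Prop :=
  [/\ resident_minimal q I, presc_P1_P5 q I P X &
      forall h r r', r \in resh h (P :|: (tentI q I :\: X)) ->
                     r' \in resh h X -> precedes (hlist I h) r r'].

End HR.

(* Main.v *)
Require Import Defs.
From mathcomp Require Import all_boot.
From mathcomp Require Import zify.
From Stdlib Require Import ClassicalEpsilon Classical.

Set Implicit Arguments.
Unset Strict Implicit.
Unset Printing Implicit Defensive.

Section Gen.
Context {R H : finType}.
Implicit Types (I J : instance R H) (q : H -> nat) (M N P X : {set R * H}).

Lemma prop_nil : prop [::] = set0 :> {set R * H}.
Proof. by apply/setP => x; rewrite !inE. Qed.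
Lemma rej_nil : rej [::] = set0 :> {set R * H}.
Proof. by apply/setP => x; rewrite !inE. Qed.
Lemma prop_Pr (s : seq (event R H)) m : prop (rcons s (Pr m)) = m |: prop s.
Proof. by apply/setP => x; rewrite !inE has_rcons /= eq_sym. Qed.
Lemma prop_Rj (s : seq (event R H)) m : prop (rcons s (Rj m)) = prop s.
Proof. by apply/setP => x; rewrite !inE has_rcons. Qed.
Lemma rej_Pr (s : seq (event R H)) m : rej (rcons s (Pr m)) = rej s.
Proof. by apply/setP => x; rewrite !inE has_rcons. Qed.
Lemma rej_Rj (s : seq (event R H)) m : rej (rcons s (Rj m)) = m |: rej s.
Proof. by apply/setP => x; rewrite !inE has_rcons /= eq_sym. Qed.

Lemma ousted_mono q I M N m : M \subset N -> ousted q I M m -> ousted q I N m.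
Proof.
case: m => r h /= sMN /and3P [mM c1 c2]; apply/and3P; split.
- exact: (subsetP sMN).
- apply: (leq_trans c1); apply: subset_leq_card; apply/subsetP=> x.
  by rewrite !inE => /andP[xM ->]; rewrite (subsetP sMN).
- case/orP: c2 => [->//|c2]; apply/orP; right; apply: (leq_trans c2).
  apply: subset_leq_card; apply/subsetP=> x.
  by rewrite !inE => /andP[xM ->]; rewrite (subsetP sMN).
Qed.


Lemma feas_inv q I (s1 : seq (event R H)) : feasible q I s1 ->
  [/\ rej s1 \subset prop s1,
      (forall r h, (r,h) \in prop s1 -> h \in rlist I r),
      (forall r h h', (r,h') \in prop s1 ->
          index h (rlist I r) < index h' (rlist I r) -> (r,h) \in rej s1),
      (forall r h h', (r,h) \in tent s1 -> (r,h') \in tent s1 -> h = h') &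
      size s1 = #|prop s1| + #|rej s1| ].
Proof.
elim=> [|s e Hs [IH1 IH2 IH3 IH4 IH5] Hstep].
  rewrite /tent prop_nil rej_nil; split=> [|r h|r h h'|r h h'|]; rewrite ?inE ?cards0 ?sub0set //.
case: e Hstep => [[r0 h0]|m] /=.
- case/and4P => nres nprop hin Hall.
  have nrej : (r0, h0) \notin rej s.
    by apply/negP => /(subsetP IH1); rewrite (negPf nprop).
  rewrite prop_Pr rej_Pr; split.
  + by apply: (subset_trans IH1); apply/subsetP => x xi; rewrite inE xi orbT.
  + move=> r h; rewrite in_setU1 => /orP[/eqP[-> ->]//|]; exact: IH2.
  + move=> r h h'; rewrite in_setU1 => /orP[/eqP[-> ->] lt|]; last exact: IH3.
    have hl : h \in rlist I r0.
      by rewrite -index_mem; apply: (leq_trans lt); rewrite -ltnS ltnS; apply: index_size.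
    by move/allP: Hall; apply; rewrite in_take.
  + have Ht : forall x, x \in tent (rcons s (Pr (r0,h0))) -> x = (r0,h0) \/ x \in tent s.
      move=> x; rewrite /tent prop_Pr rej_Pr !inE => /andP[nr /orP[/eqP->|xp]]; first by left.
      by right; rewrite nr xp.
    have nt : forall h, (r0, h) \notin tent s.
      by move=> h; apply/negP => ht; move/negP: nres; apply; rewrite inE; apply/existsP; exists h.
    move=> r h h' /Ht[e1|t1] /Ht[e2|t2].
    * by case: e1 e2 => -> -> [].
    * by case: e1 t2 => -> _; rewrite (negPf (nt _)).
    * by case: e2 t1 => -> _; rewrite (negPf (nt _)).
    * exact: IH4 t1 t2.
  + by rewrite size_rcons cardsU1 nprop IH5 /=; lia.
- case/andP => Ho nrej.
  have mp : m \in prop s by move: Ho; case: m {nrej} => r h /= /and3P[].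
  rewrite prop_Rj rej_Rj; split.
  + by apply/subsetP => x; rewrite in_setU1 => /orP[/eqP->//|/(subsetP IH1)].
  + exact: IH2.
  + by move=> r h h' hp lt; rewrite in_setU1 (IH3 _ _ _ hp lt) orbT.
  + move=> r h h'; rewrite /tent rej_Rj prop_Rj !in_setD !in_setU1.
    case/andP => /norP[_ a] b /andP[/norP[_ c] d].
    by apply: (IH4 r); rewrite /tent in_setD ?a ?b ?c ?d.
  + by rewrite size_rcons cardsU1 nrej IH5 /=; lia.
Qed.

Lemma rej_ousted q I (s1 : seq (event R H)) : feasible q I s1 ->
  forall m, m \in rej s1 -> ousted q I (prop s1) m.
Proof.
elim=> [|s e Hs IH Hstep] m; first by rewrite rej_nil inE.
case: e Hstep => [m0|m0] /=.
- rewrite prop_Pr rej_Pr => _ /IH; apply: ousted_mono.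
  by apply/subsetP => x xi; rewrite inE xi orbT.
- case/andP => Ho _; rewrite prop_Rj rej_Rj in_setU1 => /orP[/eqP->//|]; exact: IH.
Qed.


Lemma feas_size q I (s : seq (event R H)) : feasible q I s -> size s <= 2 * #|{: R * H}|.
Proof. by move=> /feas_inv[_ _ _ _ ->]; rewrite mul2n -addnn leq_add // max_card. Qed.

Lemma exists_maximal q I : exists s, maximal q I s.
Proof.
pose N := 2 * #|{: R * H}|.
suff: forall n (s : seq (event R H)), feasible q I s -> N - size s < n ->
    exists u, maximal q I u.
  by move=> /(_ (N.+1) [::] (feas_nil q I)); apply; rewrite ltnS leq_subr.
elim=> [//|n IH] s Hs lt.
case: (classic (forall t, feasible q I (s ++ t) -> t = [::])) => H1.
  by exists s; split.
have [t Hn] := not_all_ex_not _ _ H1.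
have [Hf nt] := imply_to_and _ _ Hn.
apply: (IH _ Hf).
have := feas_size Hf; rewrite size_cat.
have : 0 < size t by case: t {Hn} nt Hf => [|? ?].
rewrite -/N; lia.
Qed.

Lemma maxseq_max q I : maximal q I (maxseq q I).
Proof. rewrite /maxseq; apply: epsilon_spec; exact: exists_maximal. Qed.

Lemma sub_max q I (s1 t : seq (event R H)) : feasible q I s1 -> maximal q I t ->
  prop s1 \subset prop t /\ rej s1 \subset rej t.
Proof.
move=> Hs [Ht Hmax].
have [T1 T2 T3 T4 _] := feas_inv Ht.
have Hno : forall e, step_ok q I t e -> False.
  by move=> e He; have := Hmax [:: e]; rewrite cats1 => /(_ (feas_rcons Ht He)).
elim: Hs => [|s e Hs [IHp IHr] Hstep]; first by rewrite prop_nil rej_nil !sub0set.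
case: e Hstep => [[r h]|m] /=.
- case/and4P => nres nprop hin Hall.
  rewrite prop_Pr rej_Pr; split=> //.
  apply/subsetP => x; rewrite in_setU1 => /orP[/eqP->|/(subsetP IHp)//].
  case: (boolP ((r,h) \in prop t)) => // nP; exfalso.
  apply: (Hno (Pr (r,h))); apply/and4P; split=> //.
  + apply/negP; rewrite /res in_set => /existsP [h'' Ht''].
    have h''p : (r,h'') \in prop t by move: Ht''; rewrite /tent in_setD => /andP[].
    have h''l := T2 _ _ h''p.
    case: (ltngtP (index h'' (rlist I r)) (index h (rlist I r))) => c.
    * have : (r,h'') \in rej t.
        by apply: (subsetP IHr); move/allP: Hall; apply; rewrite in_take.
      by move: Ht''; rewrite /tent in_setD => /andP[/negP].
    * by have := T3 _ _ _ h''p c => /(subsetP T1); rewrite (negPf nP).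
    * have e : h'' = h by rewrite -(nth_index h h''l) c nth_index.
      by move: h''p; rewrite e (negPf nP).
  + apply/allP => h' hh'; apply: (subsetP IHr); exact: (allP Hall).
- case/andP => Ho nrej; rewrite prop_Rj rej_Rj; split => //.
  apply/subsetP => x; rewrite in_setU1 => /orP[/eqP->|/(subsetP IHr)//].
  case: (boolP (m \in rej t)) => // nm; exfalso.
  apply: (Hno (Rj m)); rewrite /= nm andbT; exact: ousted_mono Ho.
Qed.

Lemma rej_max q I t : maximal q I t ->
  rej t = [set m in prop t | ousted q I (prop t) m].
Proof.
move=> [Ht Hmax]; have [T1 _ _ _ _] := feas_inv Ht.
apply/setP => m; rewrite [RHS]in_set.
case: (boolP (m \in rej t)) => mr.
- by rewrite (subsetP T1 _ mr) (rej_ousted Ht mr).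
- apply/esym/negP => /andP[mp mo].
  have Hf : feasible q I (t ++ [:: Rj m]) by rewrite cats1; apply: feas_rcons => //=; rewrite mo mr.
  by have := Hmax _ Hf.
Qed.

Lemma prec_cat_l {T : eqType} (l e : seq T) a b :
  precedes l a b -> precedes (l ++ e) a b.
Proof.
by rewrite /precedes => /and3P[al bl lt]; rewrite !mem_cat al bl !index_cat al bl.
Qed.

Lemma prec_cat_lr {T : eqType} (l e : seq T) a b :
  a \in l -> b \notin l -> b \in e -> precedes (l ++ e) a b.
Proof.
move=> al bl be; rewrite /precedes !mem_cat al be orbT !index_cat al (negPf bl) /=.
by apply: (leq_trans (_ : _ < size l)); rewrite ?index_mem ?leq_addr.
Qed.

Lemma prec_cat_r {T : eqType} (l e : seq T) a b :
  a \notin l -> b \notin l -> precedes e a b -> precedes (l ++ e) a b.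
Proof.
move=> al bl /and3P[ae be lt].
by rewrite /precedes !mem_cat ae be !orbT !index_cat (negPf al) (negPf bl) ltn_add2l.
Qed.

Lemma prec_cat_eq {T : eqType} (l e : seq T) a b :
  b \in l -> precedes (l ++ e) a b = precedes l a b.
Proof.
move=> bl; rewrite /precedes !mem_cat bl ?orbT !index_cat bl /=.
case al: (a \in l) => //=; apply/negP => /andP[_ lt].
have : index b l < size l by rewrite index_mem.
move: lt; lia.
Qed.

Lemma prec_trans {T : eqType} (l : seq T) a b c :
  precedes l a b -> precedes l b c -> precedes l a c.
Proof.
by case/and3P => al _ lt1 /and3P[_ cl lt2]; rewrite /precedes al cl (ltn_trans lt1 lt2).
Qed.

Lemma prec_mem {T : eqType} (l : seq T) a b : precedes l a b -> a \in l.
Proof. by case/and3P. Qed.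

Lemma ousted_ext q I J M m : (forall r, rlist J r = rlist I r) ->
  (forall h, exists e, hlist J h = hlist I h ++ e) ->
  ousted q I M m -> ousted q J M m.
Proof.
case: m => r h hr /(_ h) [e he] /=; rewrite he => /and3P[mM c1 c2].
have c1' : q h <= #|[set r' in resh h M | r' \in hlist I h ++ e]|.
  apply: (leq_trans c1); apply: subset_leq_card; apply/subsetP => x.
  by rewrite !inE mem_cat => /andP[-> ->].
rewrite mM c1' /=.
case: (boolP (r \in hlist I h)) => rl.
- rewrite mem_cat rl /=; case/orP: c2 => [c2|c2]; first by rewrite rl in c2.
  apply: (leq_trans c2).
  apply: subset_leq_card; apply/subsetP => x; rewrite !inE => /andP[-> /=].
  exact: prec_cat_l.
- case: (boolP (r \in hlist I h ++ e)) => //= rle; apply: (leq_trans c1).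
  apply: subset_leq_card; apply/subsetP => x; rewrite !inE => /andP[-> xl] /=.
  by apply: prec_cat_lr => //; move: rle; rewrite mem_cat (negPf rl).
Qed.

Lemma feasible_ext q I J s : (forall r, rlist J r = rlist I r) ->
  (forall h, exists e, hlist J h = hlist I h ++ e) ->
  feasible q I s -> feasible q J s.
Proof.
move=> hr hh; elim=> [|s0 e Hs IH Hstep]; first exact: feas_nil.
apply: feas_rcons => //; case: e Hstep => [[r h]|m] /=; first by rewrite hr.
by case/andP => Ho ->; rewrite (ousted_ext hr hh Ho).
Qed.


Definition lowp (P X pd : {set R * H}) (h : H) (r : R) : bool :=
  ((r,h) \in P) || (((r,h) \in pd) && ((r,h) \notin X)).
Definition ext1 (I : instance R H) P X pd h :=
  [seq r <- enum R | (r \notin hlist I h) && lowp P X pd h r].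
Definition ext2 (I : instance R H) P X pd h :=
  [seq r <- enum R | (r \notin hlist I h) && ~~ lowp P X pd h r].
Definition extI (I : instance R H) P X pd : instance R H :=
  Inst (rlist I) (fun h => hlist I h ++ (ext1 I P X pd h ++ ext2 I P X pd h)).

Lemma mem_ext1 I P X pd h r :
  (r \in ext1 I P X pd h) = (r \notin hlist I h) && lowp P X pd h r.
Proof. by rewrite /ext1 mem_filter mem_enum andbT. Qed.
Lemma mem_ext2 I P X pd h r :
  (r \in ext2 I P X pd h) = (r \notin hlist I h) && ~~ lowp P X pd h r.
Proof. by rewrite /ext2 mem_filter mem_enum andbT. Qed.

Lemma mem_resh (h : H) (Z : {set R * H}) r : (r \in resh h Z) = ((r,h) \in Z).
Proof. by rewrite /resh in_set. Qed.

Lemma core q I P X pd M (rS rT : {set R * H}) :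
  (forall m, (m \in rS) = (m \in M) && ousted q I M m) ->
  (forall m, (m \in rT) = (m \in M) && ousted q (extI I P X pd) M m) ->
  (forall r h, ((r,h) \in pd) = [&& (r,h) \in M, (r,h) \notin rS & r \notin hlist I h]) ->
  (forall r h h', (r,h) \in M :\: rS -> (r,h') \in M :\: rS -> h = h') ->
  P :&: M = set0 ->
  X \subset M :\: rS ->
  res P :&: res (M :\: rS) \subset res X ->
  (forall h, #|resh h (P :|: (M :\: rS :\: X))| <= q h /\
             (resh h X != set0 -> #|resh h (P :|: (M :\: rS :\: X))| = q h)) ->
  (forall h,
        (forall r r', r \in resh h (P :|: ((M :\: rS :\: pd) :\: X)) ->
                      r' \in resh h (X :\: pd) ->
                      precedes (hlist I h) r r') /\
        (resh h (X :\: pd) != set0 -> resh h pd \subset resh h X)) ->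
  [/\ X :\: rT \subset M :\: rT,
      res P :&: res (M :\: rT) \subset res (X :\: rT),
      (forall h, #|resh h (P :|: (M :\: rT :\: (X :\: rT)))| <= q h /\
                 (resh h (X :\: rT) != set0 ->
                  #|resh h (P :|: (M :\: rT :\: (X :\: rT)))| = q h)) &
      (forall h r r', r \in resh h (P :|: (M :\: rT :\: (X :\: rT))) ->
                     r' \in resh h (X :\: rT) ->
                     precedes (hlist (extI I P X pd) h) r r')].
Proof.
move=> hS hT hpd funS HP1 HX HP4 HP5 HP6.
have hh : forall h, hlist (extI I P X pd) h = hlist I h ++ (ext1 I P X pd h ++ ext2 I P X pd h) by [].
have rST : forall m, m \in rS -> m \in rT.
  move=> m; rewrite hS hT => /andP[-> o] /=; apply: ousted_ext o => // h.
  by eexists; rewrite hh.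
have compl : forall h r, r \in hlist (extI I P X pd) h.
  move=> h r; rewrite hh !mem_cat mem_ext1 mem_ext2.
  by case: (r \in hlist I h); case: (lowp P X pd h r).
have notP : forall m, m \in M -> m \notin P.
  move=> m mM; apply/negP => mP.
  have : m \in P :&: M by rewrite inE mP mM.
  by rewrite HP1 inE.
have K : forall r y h, (r,h) \in M -> (r,h) \notin X -> (r,h) \in rT ->
    (y,h) \in X -> (y,h) \notin rT -> (r,h) \in rS.
  move=> r y h rM rX rTm yX yT.
  case: (boolP ((r,h) \in rS)) => // nrS; exfalso.
  move: rTm; rewrite hT rM /= => /and3P [_ c1 c2].
  have c2' : q h <= #|[set r' in resh h M |
                precedes (hlist I h ++ ext1 I P X pd h ++ ext2 I P X pd h) r' r]|.
    by move: c2; rewrite -hh compl /= => c2.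
  have rL : r \notin hlist I h.
    apply/negP => rL; move/negP: nrS; apply; rewrite hS rM /=; apply/and3P; split=> //.
    - apply: (leq_trans c2'); apply: subset_leq_card; apply/subsetP => x.
      rewrite !inE => /andP[-> /=]; rewrite prec_cat_eq //; exact: prec_mem.
    - apply/orP; right; apply: (leq_trans c2'); apply: subset_leq_card; apply/subsetP => x.
      by rewrite !inE prec_cat_eq.
  have rpd : (r,h) \in pd by rewrite hpd rM nrS rL.
  have rlow : lowp P X pd h r by rewrite /lowp rpd rX orbT.
  have yM : (y,h) \in M :\: rS by exact: (subsetP HX).
  case yL: (y \in hlist I h).
  - have := (HP6 h).2.
    have ne : resh h (X :\: pd) != set0.
      by apply/set0Pn; exists y; rewrite !inE yX andbT hpd yL !andbF.
    move=> /(_ ne) /subsetP /(_ r); rewrite !inE rpd => /(_ isT).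
    by rewrite (negPf rX).
  - have yMM : (y,h) \in M by move: yM; rewrite inE => /andP[].
    have ylow : lowp P X pd h y = false.
      by rewrite /lowp (negPf (notP _ yMM)) yX andbF.
    have pry : precedes (hlist I h ++ ext1 I P X pd h ++ ext2 I P X pd h) r y.
      apply: prec_cat_r; rewrite ?yL //.
      apply: prec_cat_lr; rewrite ?mem_ext1 ?mem_ext2 ?yL ?ylow ?rL ?rlow //.
    move/negP: yT; apply; rewrite hT yMM /= c1 yMM /=; apply/orP; right.
    apply: (leq_trans c2'); apply: subset_leq_card; apply/subsetP => x.
    rewrite !inE => /andP[-> /=] px; exact: prec_trans px pry.
have eqT : forall x, (x \in M :\: rT :\: (X :\: rT)) = [&& x \notin X, x \notin rT & x \in M].
  by move=> x; rewrite !inE; case: (x \in rT); rewrite ?andbF ?andbT.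
split.
- apply/subsetP => x; rewrite !inE => /andP[-> xX] /=.
  by move: (subsetP HX x xX); rewrite inE => /andP[].
- apply/subsetP => r; rewrite !inE => /andP[rP /existsP[h2]].
  rewrite !inE => /andP[nr2 rM2].
  have nrs2 : (r,h2) \notin rS by apply/negP => /rST; rewrite (negPf nr2).
  have : r \in res P :&: res (M :\: rS).
    by rewrite !inE rP /=; apply/existsP; exists h2; rewrite !inE nrs2 rM2.
  move/(subsetP HP4); rewrite inE => /existsP[h3 rX3].
  have e : h3 = h2 by apply: (funS r) => //; [exact: (subsetP HX) | rewrite !inE nrs2].
  by apply/existsP; exists h2; rewrite !inE -e rX3 e nr2.
- move=> h.
  have sub1 : resh h (P :|: (M :\: rT :\: (X :\: rT))) \subset resh h (P :|: (M :\: rS :\: X)).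
    apply/subsetP => r; rewrite !mem_resh !in_setU eqT; case: ((r,h) \in P) => //=.
    case/and3P => rX nr rM; rewrite !inE rX rM andbT /=.
    by apply/negP => /rST; rewrite (negPf nr).
  split; first exact: leq_trans (subset_leq_card sub1) (HP5 h).1.
  case/set0Pn => y; rewrite !inE => /andP[yT yX].
  have neX : resh h X != set0 by apply/set0Pn; exists y; rewrite inE.
  suff -> : resh h (P :|: (M :\: rT :\: (X :\: rT))) = resh h (P :|: (M :\: rS :\: X)) by exact: (HP5 h).2.
  apply/eqP; rewrite eqEsubset sub1 /=.
  apply/subsetP => r; rewrite !mem_resh !in_setU eqT; case: ((r,h) \in P) => //=.
  rewrite !inE => /andP[rX /andP[nrS rM]]; rewrite rX rM andbT /=.
  by apply/negP => rT'; rewrite (K r y h rM rX rT' yX yT) in nrS.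
- move=> h r r'; rewrite !mem_resh in_setU eqT !inE => hr /andP[r'T r'X].
  have r'M : (r',h) \in M :\: rS by exact: (subsetP HX).
  have r'MM : (r',h) \in M by move: r'M; rewrite inE => /andP[].
  case/orP: (orbN (r' \in hlist I h)) => r'L.
  + rewrite hh; apply: prec_cat_l; apply: (HP6 h).1; last first.
      by rewrite !inE r'X andbT hpd r'L /= !andbF.
    rewrite !inE; case/orP: hr => [->//|/and3P[rX nrT rM]].
    have nrS : (r,h) \notin rS by apply/negP => /rST; rewrite (negPf nrT).
    rewrite rX nrS rM /= !andbT; apply/orP; right.
    apply/negP => rpd.
    have ne : resh h (X :\: pd) != set0.
      by apply/set0Pn; exists r'; rewrite !inE r'X andbT hpd r'L /= !andbF.
    by move/subsetP: ((HP6 h).2 ne) => /(_ r); rewrite !inE rpd (negPf rX) => /(_ isT).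
  + have r'low : lowp P X pd h r' = false.
      by rewrite /lowp (negPf (notP _ r'MM)) r'X andbF.
    case/orP: (orbN (r \in hlist I h)) => rL.
    * rewrite hh; apply: prec_cat_lr; rewrite ?r'L // mem_cat mem_ext2 r'L r'low orbT //.
    * rewrite hh; apply: prec_cat_r; rewrite ?rL ?r'L //.
      apply: prec_cat_lr; rewrite ?mem_ext1 ?mem_ext2 ?r'L ?r'low ?rL //=.
      case/orP: hr => [rP|/and3P[rX nrT rM]]; first by rewrite /lowp rP.
      have nrS : (r,h) \notin rS by apply/negP => /rST; rewrite (negPf nrT).
      by rewrite /lowp hpd rM nrS rL rX orbT.
Qed.

End Gen.

Theorem lemma4 (R H : finType) (q : H -> nat) (I : instance R H)
    (P X : {set R * H}) :
  inst_ok q I ->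
  resident_minimal q I ->
  prescription q I P X ->
  exists I' : instance R H,
    [/\ inst_ok q I', extension I I', resident_changeless I I',
        hospital_complete I' &
        prescription_hc q I' P (X :\: rejI q I')].
Proof.
rewrite /inst_ok /prescription /presc_P1_P5.
move=> [Hq [Hur Huh]] Hrm [_ [HP1 HP2 HP3 HP4 HP5] HP6].
set pd := pendI q I.
set I' := extI I P X pd.
exists I'.
have hr : forall r, rlist I' r = rlist I r by [].
have hh : forall h, exists e, hlist I' h = hlist I h ++ e by move=> h; eexists.
have Hs := maxseq_max q I.
have Ht := maxseq_max q I'.
rewrite /resident_minimal /propI in Hrm.
set s := maxseq q I in Hs Hrm *.
set t := maxseq q I' in Ht *.
set M := [set m : R * H | m.2 \in rlist I m.1] in Hrm.
have pT : prop t = M.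
  apply/eqP; rewrite eqEsubset; apply/andP; split.
  - apply/subsetP => [[r h]] hp; rewrite inE /=.
    have [_ T2 _ _ _] := feas_inv Ht.1; exact: T2 _ _ hp.
  - rewrite -Hrm; exact: (sub_max (feasible_ext hr hh Hs.1) Ht).1.
have rS : forall m, (m \in rej s) = (m \in M) && ousted q I M m.
  by move=> m; rewrite (rej_max Hs) Hrm in_set.
have rT : forall m, (m \in rej t) = (m \in M) && ousted q I' M m.
  by move=> m; rewrite (rej_max Ht) pT in_set.
have hpd : forall r h, ((r,h) \in pd) = [&& (r,h) \in M, (r,h) \notin rej s & r \notin hlist I h].
  move=> r h; rewrite /pd /pendI -/s /pend in_set /tent in_setD Hrm /=.
  by case: ((r,h) \in M); case: ((r,h) \in rej s).
have funS : forall r h h', (r,h) \in M :\: rej s -> (r,h') \in M :\: rej s -> h = h'.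
  by move=> r h h'; rewrite -Hrm; have [_ _ _ T4 _] := feas_inv Hs.1; exact: T4.
rewrite /tentI /propI /tent -/s Hrm in HP1 HP3 HP4 HP5 HP6.
have [C1 C2 C3 C4] := core rS rT hpd funS HP1 HP3 HP4 HP5 HP6.
split.
- split=> //; split=> // h; rewrite /I' /extI /= cat_uniq Huh /=; apply/andP; split.
  + apply/hasP => [[x]]; rewrite mem_cat mem_ext1 mem_ext2 => + xl.
    by rewrite xl.
  + have u1 : uniq (ext1 I P X pd h) by apply: filter_uniq; apply: enum_uniq.
    have u2 : uniq (ext2 I P X pd h) by apply: filter_uniq; apply: enum_uniq.
    rewrite cat_uniq u1 u2 /= andbT.
    apply/hasP => [[x]]; rewrite mem_ext1 mem_ext2 => /andP[_ nl] /andP[_ l].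
    by rewrite l in nl.
- by split=> [r|h]; [exact: prefix_refl | exact: prefix_prefix].
- by [].
- move=> h r; rewrite /I' /extI /= !mem_cat mem_ext1 mem_ext2.
  by case: (r \in hlist I h); case: (lowp P X pd h r).
- rewrite /prescription_hc /presc_P1_P5 /resident_minimal /tentI /rejI /propI /tent -/t pT.
  by split...
Qed.
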